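(* Assume the setting described in the context. Let $\mathbf p\in\mathcal C^*$ and let $\mathbf K\in\mathbb N^t$ be its preferred factorization with respect to the factoring order $(\pi_1,\dots,\pi_t)$. Then $\mathbf K$ is the lexicographically largest element of the set $\{\mathbf K'\in\mathbb N^t: K'_1\pi_1+\cdots+K'_t\pi_t=\mathbf p\}$ of all factorizations of $\mathbf p$ into admissible primes.
   Context: $\mathbb N=\{0,1,2,\dots\}$. For a real $n\times n$ matrix $A$ and $f\in\mathbb R[[\mathbf x]]$ put $\mathcal D_Af(\mathbf x)=f'(\mathbf x)A\mathbf x$. Let $(\acute X,\acute Y,\acute Z)$ and $(\grave X,\grave Y,\grave Z)$ be $\mathfrak{sl}_2$ triads (i.e. $[X,Y]=Z,[Z,X]=2X,[Z,Y]=-2Y$) of real $n\times n$ resp. $m\times m$ matrices; set $\acute{\mathcal X}=\mathcal D_{\acute Y}$, $\acute{\mathcal Z}=\mathcal D_{\acute Z}$ on $\mathbb R[[\mathbf x]]$ and $\grave{\mathcal X}=\mathcal D_{\grave Y}$, $\grave{\mathcal Z}=\mathcal D_{\grave Z}$ on $\mathbb R[[\mathbf y]]$; $\acute{\mathcal J}=\ker\acute{\mathcal X}$, $\grave{\mathcal J}=\ker\grave{\mathcal X}$. A weight invariant is an element $f$ of $\acute{\mathcal J}$ (resp. $\grave{\mathcal J}$) with $\acute{\mathcal Z}f=\widehat ff$ (resp. $\grave{\mathcal Z}f=\widehat ff$). Let $\alpha=(\alpha_1,\dots,\alpha_p)$ be a Hilbert basis of $\acute{\mathcal J}$ (homogeneous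 weight invariants, weights $\widehat\alpha_i$, whose monomials $\alpha^{\mathbf k}$ span $\acute{\mathcal J}$ by countable linear combinations) and $\beta=(\beta_1,\dots,\beta_q)$ one of $\grave{\mathcal J}$ (weights $\widehat\beta_j$); $\widehat\alpha\mathbf k=\sum\widehat\alpha_ik_i$, $\widehat\beta\boldsymbol\ell=\sum\widehat\beta_j\ell_j$. Let $\acute A\subset\mathbb N^p$, $\grave A\subset\mathbb N^q$ be standard preferred sets: the monomials $\alpha^{\mathbf k}$, $\mathbf k\in\acute A$, are pairwise distinct, linearly independent and span $\acute{\mathcal J}$ by countable linear combinations, and $\acute A$ is closed under passing to componentwise smaller vectors in $\mathbb N^p$; likewise for $\grave A$. Transvectant cone $\mathcal C=\{(\mathbf k;\boldsymbol\ell;s)\in\mathbb N^{p+q+1}:s\le\widehat\alpha\mathbf k,\ s\le\widehat\beta\boldsymbol\ell\}$; $\mathcal C^*=\{(\mathbf k;\boldsymbol\ell;s)\in\mathcal C:\mathbf k\in\acute A,\boldsymbol\ell\in\grave A\}$. A prime is a nonzero element of $\mathcal C$ not a sum of two nonzero elements of $\mathcal C$; $\Pi^*=\{\pi_1,\dots,\pi_t\}$ is the set of primes lying in $\mathcal C^*$, listed in a fixed order (the factoring order). The preferred factorization of $\mathbf p\in\mathcal C^*$ is the vector $\mathbf K\in\mathbb N^t$ obtained greedily: $K_1=\max\{j\in\mathbb N:\mathbf p-j\pi_1\in\mathcal C\}$, and for $i=2,\dots,t$, $K_i=\max\{j:\mathbf p-K_1\pi_1-\cdots-K_{i-1}\pi_{i-1}-j\pi_i\in\mathcal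 C\}$ (one has $\sum K_i\pi_i=\mathbf p$). Lexicographic order on $\mathbb N^t$ compares the first differing entry. *)

(* Defs.v *)
From mathcomp Require Import all_boot.
Set Implicit Arguments. Unset Strict Implicit. Unset Printing Implicit Defensive.

(* A point (k; l; s) of N^(np + nq + 1). *)
Definition tpoint (np nq : nat) : Type :=
  ({ffun 'I_np -> nat} * {ffun 'I_nq -> nat} * nat)%type.

Section Cone.
Variables (np nq : nat).
Local Notation pt := (tpoint np nq).

Definition vzero : pt := ([ffun => 0], [ffun => 0], 0).
Definition vadd (u v : pt) : pt :=
  ([ffun i => u.1.1 i + v.1.1 i], [ffun j => u.1.2 j + v.1.2 j], u.2 + v.2).
Definition vscale (c : nat) (u : pt) : pt :=
  ([ffun i => c * u.1.1 i], [ffun j => c * u.1.2 j], c * u.2).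

Definition wdeg n (w : 'I_n -> nat) (k : {ffun 'I_n -> nat}) : nat :=
  \sum_(i < n) w i * k i.

Definition inC (wa : 'I_np -> nat) (wb : 'I_nq -> nat) (x : pt) : Prop :=
  x.2 <= wdeg wa x.1.1 /\ x.2 <= wdeg wb x.1.2.

Definition inCstar wa wb (Aa : {ffun 'I_np -> nat} -> Prop)
  (Ab : {ffun 'I_nq -> nat} -> Prop) (x : pt) : Prop :=
  inC wa wb x /\ Aa x.1.1 /\ Ab x.1.2.

Definition primeC wa wb (x : pt) : Prop :=
  inC wa wb x /\ x <> vzero /\
  ~ (exists u v, inC wa wb u /\ inC wa wb v /\ u <> vzero /\ v <> vzero /\
                 x = vadd u v).

Definition minus_inC wa wb (x v : pt) : Prop :=
  exists r, inC wa wb r /\ vadd r v = x.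

Definition partial_comb t (K : 'I_t -> nat) (pi : 'I_t -> pt) (m : nat) : pt :=
  \big[vadd/vzero]_(i < t | i < m) vscale (K i) (pi i).

Definition comb t (K : 'I_t -> nat) (pi : 'I_t -> pt) : pt :=
  \big[vadd/vzero]_(i < t) vscale (K i) (pi i).

Definition preferred_factorization wa wb t (pi : 'I_t -> pt) (x : pt)
  (K : 'I_t -> nat) : Prop :=
  forall i : 'I_t,
    minus_inC wa wb x (vadd (partial_comb K pi i) (vscale (K i) (pi i))) /\
    (forall j, minus_inC wa wb x (vadd (partial_comb K pi i) (vscale j (pi i))) ->
               j <= K i).
End Cone.

Definition lex_le t (K' K : 'I_t -> nat) : Prop :=
  (forall i, K' i = K i) \/
  (exists i : 'I_t, (forall j : 'I_t, j < i -> K' j = K j) /\ K' i < K i).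

Definition lex_greatest t (S : ('I_t -> nat) -> Prop) (K : 'I_t -> nat) : Prop :=
  S K /\ forall K', S K' -> lex_le K' K.

Definition down_closed n (A : {ffun 'I_n -> nat} -> Prop) : Prop :=
  forall k k' : {ffun 'I_n -> nat}, A k -> (forall i, k' i <= k i) -> A k'.

(* Main.v *)
From HB Require Import structures.
Require Import Defs.
From mathcomp Require Import all_boot zify.
From Stdlib Require Import Classical Arith ArithRing.
Set Implicit Arguments. Unset Strict Implicit. Unset Printing Implicit Defensive.

Section Aux.
Variables (np nq : nat).
Local Notation pt := (tpoint np nq).
Local Notation vzero := (@vzero np nq).

Lemma vaddC (u v : pt) : vadd u v = vadd v u.
Proof.
rewrite /vadd; congr (_,_,_); last exact: addnC.
  by apply/ffunP=> i; rewrite !ffunE addnC.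
by apply/ffunP=> i; rewrite !ffunE addnC.
Qed.

Lemma vaddA (u v w : pt) : vadd u (vadd v w) = vadd (vadd u v) w.
Proof.
rewrite /vadd /=; congr (_,_,_); last exact: addnA.
  by apply/ffunP=> i; rewrite !ffunE addnA.
by apply/ffunP=> i; rewrite !ffunE addnA.
Qed.

Lemma vadd0l (u : pt) : vadd vzero u = u.
Proof.
case: u => [[a b] c]; rewrite /vadd /vzero /=; congr (_,_,_).
  by apply/ffunP=> i; rewrite !ffunE.
by apply/ffunP=> i; rewrite !ffunE.
Qed.

HB.instance Definition _ := Monoid.isComLaw.Build pt vzero (@vadd np nq) vaddA vaddC vadd0l.

Lemma vscaleS k (u : pt) : vscale k.+1 u = vadd (vscale k u) u.
Proof.
rewrite /vadd /vscale /=; congr (_,_,_); last by rewrite mulSn addnC.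
  by apply/ffunP=> i; rewrite !ffunE mulSn addnC.
by apply/ffunP=> i; rewrite !ffunE mulSn addnC.
Qed.

Variables (wa : 'I_np -> nat) (wb : 'I_nq -> nat).

Lemma wdeg_add n (w : 'I_n -> nat) (a b : {ffun 'I_n -> nat}) :
  wdeg w [ffun i => a i + b i] = wdeg w a + wdeg w b.
Proof. by rewrite /wdeg -big_split; apply: eq_bigr => i _; rewrite ffunE mulnDr. Qed.

Lemma wdeg_scale n (w : 'I_n -> nat) c (a : {ffun 'I_n -> nat}) :
  wdeg w [ffun i => c * a i] = c * wdeg w a.
Proof.
by rewrite /wdeg big_distrr; apply: eq_bigr => i _; rewrite ffunE mulnCA.
Qed.

Lemma inC_add (u v : pt) : inC wa wb u -> inC wa wb v -> inC wa wb (vadd u v).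
Proof.
case=> h1 h2 [h3 h4]; rewrite /inC /= !wdeg_add; split; exact: leq_add.
Qed.

Lemma inC_scale c (u : pt) : inC wa wb u -> inC wa wb (vscale c u).
Proof.
case=> h1 h2; rewrite /inC /= !wdeg_scale; split; exact: leq_mul.
Qed.

Lemma inC0 : inC wa wb (vzero : pt).
Proof. by split. Qed.

Definition sz (u : pt) := \sum_i u.1.1 i + \sum_j u.1.2 j + u.2.

Lemma sz_add (u v : pt) : sz (vadd u v) = sz u + sz v.
Proof.
rewrite /sz /=.
have -> : \sum_(i < np) [ffun i => u.1.1 i + v.1.1 i] i = \sum_(i < np) u.1.1 i + \sum_(i < np) v.1.1 i.
  by rewrite -big_split; apply: eq_bigr => i _; rewrite ffunE.
have -> : \sum_(i < nq) [ffun i => u.1.2 i + v.1.2 i] i = \sum_(i < nq) u.1.2 i + \sum_(i < nq) v.1.2 i.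
  by rewrite -big_split; apply: eq_bigr => i _; rewrite ffunE.
move: (\sum_(i < np) u.1.1 i) (\sum_(i < np) v.1.1 i) (\sum_(i < nq) u.1.2 i) (\sum_(i < nq) v.1.2 i) => a b c d; lia.
Qed.

Lemma sz0 (u : pt) : u <> vzero -> 0 < sz u.
Proof.
case: u => [[a b] c] hne; rewrite /sz /=.
case: (posnP c) => [c0|]; last by move=> h; rewrite ltn_addl.
rewrite c0 addn0.
case: (posnP (\sum_i a i)) => [ha|h]; last by rewrite ltn_addr.
case: (posnP (\sum_j b j)) => [hb|h]; last by rewrite ltn_addl.
exfalso; apply: hne; rewrite c0 /vzero; congr (_,_,_).
  apply/ffunP=> i; rewrite ffunE; apply/eqP; rewrite -leqn0 -ha.
  by rewrite (bigD1 i) //= leq_addr.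
apply/ffunP=> i; rewrite ffunE; apply/eqP; rewrite -leqn0 -hb.
by rewrite (bigD1 i) //= leq_addr.
Qed.

Lemma prime_summand (r : pt) : inC wa wb r -> r <> vzero ->
  exists p u, primeC wa wb p /\ inC wa wb u /\ r = vadd p u.
Proof.
move: {2}(sz r).+1 (ltnSn (sz r)) => n; elim: n r => [//|n IH] r hn hr hne.
case: (classic (primeC wa wb r)) => [hp|hnp].
  by exists r, vzero; split=> //; split; [exact: inC0| rewrite vaddC vadd0l].
have [u [v [hu [hv [hu0 [hv0 ruv]]]]]] :
  exists u v, inC wa wb u /\ inC wa wb v /\ u <> vzero /\ v <> vzero /\ r = vadd u v.
  apply: NNPP => hcon; apply: hnp; split=> //; split=> //.
have hsz : sz u < n.
  move: hn; rewrite ruv sz_add; have := sz0 hv0; lia.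
have [p [u' [hp [hu' hup]]]] := IH u hsz hu hu0.
exists p, (vadd u' v); split=> //; split; first exact: inC_add.
by rewrite ruv hup vaddA.
Qed.

Lemma pt_ext (u v : pt) : u.1.1 =1 v.1.1 -> u.1.2 =1 v.1.2 -> u.2 = v.2 -> u = v.
Proof.
case: u => [[a b] c]; case: v => [[a' b'] c'] /= h1 h2 ->.
by congr (_,_,_); apply/ffunP.
Qed.

Lemma acl (a R P S q : nat) : a + R + (P + (S + q)) = q + a + (P + (S + R)).
Proof. lia. Qed.

Ltac vac0 := apply: pt_ext => [i|i|] /=; rewrite ?ffunE /=; try lia.

Variables (t : nat) (pi : 'I_t -> pt).
Hypothesis piC : forall j, inC wa wb (pi j).

Definition rest (K : 'I_t -> nat) (i : nat) :=
  \big[@vadd np nq/vzero]_(j < t | i < j) vscale (K j) (pi j).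

Lemma split_comb K (i : 'I_t) :
  comb K pi = vadd (partial_comb K pi i) (vadd (vscale (K i) (pi i)) (rest K i)).
Proof.
rewrite /comb (bigID (fun j : 'I_t => j < i)) /=; congr vadd.
rewrite (bigD1 i) ?ltnn //=; congr vadd.
apply: eq_bigl => j; rewrite -leqNgt ltn_neqAle eq_sym andbC.
by [].
Qed.

Lemma rest_inC K i : inC wa wb (rest K i).
Proof.
rewrite /rest; apply: (big_ind (inC wa wb)); first exact: inC0.
  exact: inC_add.
by move=> j _; apply: inC_scale.
Qed.

End Aux.

Theorem theorem11p8
  (np nq : nat) (wa : 'I_np -> nat) (wb : 'I_nq -> nat)
  (Aa : {ffun 'I_np -> nat} -> Prop) (Ab : {ffun 'I_nq -> nat} -> Prop)
  (hAa : down_closed Aa) (hAb : down_closed Ab)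
  (t : nat) (pi : 'I_t -> tpoint np nq)
  (pi_inj : injective pi)
  (pi_spec : forall x : tpoint np nq,
      (primeC wa wb x /\ inCstar wa wb Aa Ab x) <-> exists i, pi i = x)
  (x : tpoint np nq) (hx : inCstar wa wb Aa Ab x)
  (K : 'I_t -> nat) (hK : preferred_factorization wa wb pi x K) :
  lex_greatest (fun K' : 'I_t -> nat => comb K' pi = x) K.
Proof.
have piC : forall j, inC wa wb (pi j).
  by move=> j; have [[h _] _] := proj2 (pi_spec (pi j)) (ex_intro _ j erefl).
have combx : comb K pi = x.
  have [r [hr hrx]] : exists r, inC wa wb r /\ vadd r (comb K pi) = x.
    case: (posnP t) => ht.
      exists x; split; first by case: hx.
      rewrite /comb big1 => [|i _]; first by rewrite vaddC vadd0l.
      by exfalso; case: i => i hi; move: hi; rewrite ht.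
    have hlt : t.-1 < t by rewrite prednK.
    pose i := Ordinal hlt.
    have [[r [hr hrx]] _] := hK i.
    exists r; split=> //; rewrite (@split_comb np nq t pi K i).
    have -> : @rest np nq t pi K i = vzero np nq.
      rewrite /rest big1 // => j hj; exfalso.
      by have := ltn_ord j; move: hj; rewrite /= -ltnS prednK // => /leq_trans h /h; rewrite ltnn.
    by rewrite -hrx; congr vadd; rewrite [vadd _ (vzero _ _)]vaddC vadd0l.
  case: (classic (r = vzero np nq)) => [r0|rn0].
    by rewrite -hrx r0 vadd0l.
  have [p [u [hp [hu ruv]]]] := prime_summand (wa:=wa) (wb:=wb) hr rn0.
  have hpx : inCstar wa wb Aa Ab p.
    split; first by case: hp.
    case: hx => _ [ha hb]; split.
      apply: (hAa _ _ ha) => i; rewrite -hrx ruv /= !ffunE.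
      by rewrite -addnA leq_addr.
    apply: (hAb _ _ hb) => i; rewrite -hrx ruv /= !ffunE.
    by rewrite -addnA leq_addr.
  have [i pip] := proj1 (pi_spec p) (conj hp hpx).
  have := (proj2 (hK i)) (K i).+1.
  rewrite ltnn => H; exfalso; apply: notF; apply: H.
  exists (vadd u (@rest np nq t pi K i)); split; first by apply: inC_add => //; exact: (@rest_inC np nq wa wb t pi piC).
  rewrite -hrx (@split_comb np nq t pi K i) ruv -pip vscaleS.
  by apply: pt_ext => [j|j|] /=; rewrite ?ffunE /=; apply: acl.
split=> // K' hK'.
case: (boolP [exists i, K' i != K i]) => [/existsP [i0 hi0]|hne]; last first.
  left=> i; apply/eqP; move/existsPn: hne => /(_ i); by rewrite negbK.
right.
case: (@arg_minnP _ i0 (fun i => K' i != K i) (fun i : 'I_t => val i) hi0) => i hi hmin.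
exists i; split.
  move=> j hj; apply/eqP; apply: contraTT hj => hj; rewrite -leqNgt; exact: hmin.
rewrite ltn_neqAle hi /=.
rewrite leqNgt; apply/negP => hlt.
have := (proj2 (hK i)) (K' i).
rewrite leqNgt hlt => H; apply: notF; apply: H.
exists (@rest np nq t pi K' i); split; first exact: (@rest_inC np nq wa wb t pi piC).
have -> : partial_comb K pi i = partial_comb K' pi i.
  rewrite /partial_comb; apply: eq_bigr => j hj; congr vscale.
  apply/esym/eqP; apply: contraTT hj => hj; rewrite -leqNgt; exact: hmin.
rewrite -hK' (@split_comb np nq t pi K' i) vaddC.
apply: pt_ext => [j|j|] /=; by rewrite ?ffunE /= -addnA.
Qed.
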